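(* Let $\boldsymbol{u}^\star\in\mathbb{R}^n$ and $f(\boldsymbol{u})=\frac12\|\boldsymbol{u}\boldsymbol{u}^{\mathrm T}-\boldsymbol{u}^\star{\boldsymbol{u}^\star}^{\mathrm T}\|_1$ on $\mathbb{R}^n$. For any spurious stationary point $\boldsymbol{u}$ of $f$ and for $\boldsymbol{w}=\boldsymbol{u}^\star-\boldsymbol{u}$ as well as for $\boldsymbol{w}=-\boldsymbol{u}^\star-\boldsymbol{u}$, one has $df(\boldsymbol{u})(\boldsymbol{w})=0$.
   Context: $\|\cdot\|_1$ is the entrywise $\ell_1$-norm. $df(\boldsymbol{x})(\boldsymbol{w})=\lim_{t\searrow0}(f(\boldsymbol{x}+t\boldsymbol{w})-f(\boldsymbol{x}))/t$. A point $\boldsymbol{u}$ is stationary if $\boldsymbol{0}\in\partial f(\boldsymbol{u})$, where $\partial f(\boldsymbol{u})=\{\boldsymbol{Z}\boldsymbol{u}:\boldsymbol{Z}\text{ symmetric}, \boldsymbol{Z}\in\operatorname{Sign}(\boldsymbol{u}\boldsymbol{u}^{\mathrm T}-\boldsymbol{u}^\star{\boldsymbol{u}^\star}^{\mathrm T})\}$ (entrywise set-valued sign, $\operatorname{Sign}(0)=[-1,1]$) is the (Fréchet = limiting = Clarke) subdifferential; it is spurious if additionally $\boldsymbol{u}\notin\{\boldsymbol{u}^\star,-\boldsymbol{u}^\star\}$. *)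

(* Defs.v *)
From HB Require Import structures.
From mathcomp Require Import all_boot all_order all_algebra.
From mathcomp Require Import all_classical all_reals all_analysis.
Set Implicit Arguments. Unset Strict Implicit. Unset Printing Implicit Defensive.
Import Order.TTheory GRing.Theory Num.Theory.
Import numFieldNormedType.Exports.
Local Open Scope classical_set_scope.
Local Open Scope ring_scope.

Definition l1norm (R : realType) (n : nat) (A : 'M[R]_n) : R :=
  \sum_(i < n) \sum_(j < n) `|A i j|.

Definition fobj (R : realType) (n : nat) (us u : 'cV[R]_n) : R :=
  2^-1 * l1norm (u *m u^T - us *m us^T).

Definition in_Sign (R : realType) (x z : R) : Prop :=
  if 0 < x then z = 1 else if x < 0 then z = -1 else -1 <= z <= 1.

(* 0 \in \partial f(u) *)
Definition stationary (R : realType) (n : nat) (us u : 'cV[R]_n) : Prop :=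
  exists Z : 'M[R]_n,
    Z^T = Z /\
    (forall i j, in_Sign ((u *m u^T - us *m us^T) i j) (Z i j)) /\
    Z *m u = 0.

Definition spurious (R : realType) (n : nat) (us u : 'cV[R]_n) : Prop :=
  stationary us u /\ u <> us /\ u <> - us.

Definition dirderiv_is (R : realType) (n : nat) (f : 'cV[R]_n -> R)
    (u w : 'cV[R]_n) (l : R) : Prop :=
  (fun t : R => (f (u + t *: w) - f u) / t) @ 0^'+ --> l.

(* Main.v *)
Require Import Defs.
From HB Require Import structures.
From mathcomp Require Import all_boot all_order all_algebra.
From mathcomp Require Import all_classical all_reals all_analysis.
From mathcomp Require Import ring lra.
Import Order.TTheory GRing.Theory Num.Theory.
Import numFieldNormedType.Exports.
Local Open Scope ring_scope.
Set Implicit Arguments. Unset Strict Implicit.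
Definition valid (R : realType) (n : nat) (us u : 'cV[R]_n) (Z : 'M[R]_n) :=
  Z^T = Z /\
  (forall i j, in_Sign ((u *m u^T - us *m us^T) i j) (Z i j)) /\ Z *m u = 0.

Definition cc (R : realType) (n : nat) (us u : 'cV[R]_n) (i : 'I_n) : R :=
  us i 0 / u i 0.
Arguments cc : simpl never.
Definition Wt (R : realType) (n : nat) (u : 'cV[R]_n) (P : pred 'I_n) : R :=
  \sum_l `|u l 0| * (P l)%:R.
Definition Yf (R : realType) (n : nat) (u : 'cV[R]_n) (Z : 'M[R]_n) k l : R :=
  Num.sg (u k 0) * Num.sg (u l 0) * Z k l.

Lemma entryD (R : realType) (n : nat) (us u : 'cV[R]_n) i j :
  (u *m u^T - us *m us^T) i j = u i 0 * u j 0 - us i 0 * us j 0.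
Proof. by rewrite !mxE !big_ord1 !mxE. Qed.

Lemma Zbound (R : realType) (n : nat) (us u : 'cV[R]_n) Z i j :
  valid us u Z -> `|Z i j| <= 1.
Proof.
move=> [_ [hs _]]; have := hs i j; rewrite /in_Sign.
case: ifP => _; first by move=> ->; rewrite normr1.
case: ifP => _; first by move=> ->; rewrite normrN normr1.
by move=> h; rewrite ler_norml.
Qed.

Lemma Zpos (R : realType) (n : nat) (us u : 'cV[R]_n) Z i j :
  valid us u Z -> 0 < (u *m u^T - us *m us^T) i j -> Z i j = 1.
Proof. by move=> [_ [hs _]] h; have := hs i j; rewrite /in_Sign h. Qed.

Lemma Zneg (R : realType) (n : nat) (us u : 'cV[R]_n) Z i j :
  valid us u Z -> (u *m u^T - us *m us^T) i j < 0 -> Z i j = -1.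
Proof.
move=> [_ [hs _]] h; have := hs i j; rewrite /in_Sign h.
by rewrite ltNge (ltW h).
Qed.

Lemma sc (R : realType) (n : nat) (us u : 'cV[R]_n) k :
  u k 0 != 0 -> us k 0 = cc us u k * u k 0.
Proof. by move=> h; rewrite /cc divfK. Qed.

Lemma Dfac (R : realType) (n : nat) (us u : 'cV[R]_n) k l :
  u k 0 != 0 -> u l 0 != 0 ->
  (u *m u^T - us *m us^T) k l = u k 0 * u l 0 * (1 - cc us u k * cc us u l).
Proof.
move=> hk hl; rewrite entryD (sc us hk) (sc us hl).
by rewrite /cc; field; apply/andP.
Qed.

Lemma Ysign (R : realType) (n : nat) (us u : 'cV[R]_n) Z k l :
  valid us u Z -> u k 0 != 0 -> u l 0 != 0 ->
  (cc us u k * cc us u l < 1 -> Yf u Z k l = 1) /\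
  (1 < cc us u k * cc us u l -> Yf u Z k l = -1).
Proof.
move=> hv hk hl; rewrite /Yf -sgrM.
have hkl : u k 0 * u l 0 != 0 by rewrite mulf_neq0.
have hD := Dfac us hk hl.
case: (ltgtP (u k 0 * u l 0) 0) => hs; last by rewrite hs eqxx in hkl.
- split => h.
  + rewrite (Zneg hv); first by rewrite ltr0_sg // mulrN1 opprK.
    by rewrite hD pmulr_llt0 // subr_gt0.
  + rewrite (Zpos hv); first by rewrite ltr0_sg // mulr1.
    by rewrite hD nmulr_lgt0 // subr_lt0.
- split => h.
  + rewrite (Zpos hv); first by rewrite gtr0_sg // mulr1.
    by rewrite hD mulr_gt0 // subr_gt0.
  + rewrite (Zneg hv); first by rewrite gtr0_sg // mul1r.
    by rewrite hD pmulr_rlt0 // subr_lt0.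
Qed.

Lemma Ybound (R : realType) (n : nat) (us u : 'cV[R]_n) Z k l :
  valid us u Z -> `|Yf u Z k l| <= 1.
Proof.
move=> hv; rewrite /Yf !normrM !normr_sg.
have := Zbound k l hv.
case: (u k 0 != 0); case: (u l 0 != 0); rewrite /= ?mul1r ?mul0r //.
Qed.

Lemma Ysym (R : realType) (n : nat) (us u : 'cV[R]_n) Z k l :
  valid us u Z -> Yf u Z k l = Yf u Z l k.
Proof.
move=> [hsym _]; rewrite /Yf.
have := congr1 (fun M : 'M[R]_n => M k l) hsym; rewrite mxE => ->.
by rewrite [Num.sg (u k 0) * _]mulrC.
Qed.

Lemma rowsum (R : realType) (n : nat) (us u : 'cV[R]_n) Z k :
  valid us u Z -> \sum_l `|u l 0| * Yf u Z k l = 0.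
Proof.
move=> [_ [_ hZ]].
have := congr1 (fun M : 'cV[R]_n => M k 0) hZ; rewrite !mxE => h.
transitivity (Num.sg (u k 0) * \sum_j Z k j * u j 0); last by rewrite h mulr0.
rewrite mulr_sumr; apply: eq_bigr => l _.
rewrite /Yf -{3}(mulr_sg_norm (u l 0)).
ring.
Qed.
Definition PP (R : realType) (n : nat) (us u : 'cV[R]_n) k : pred 'I_n :=
  fun l => cc us u k * cc us u l < 1.
Definition NN (R : realType) (n : nat) (us u : 'cV[R]_n) k : pred 'I_n :=
  fun l => 1 < cc us u k * cc us u l.
Definition EE (R : realType) (n : nat) (us u : 'cV[R]_n) k : pred 'I_n :=
  fun l => cc us u k * cc us u l == 1.
Definition TT (R : realType) (n : nat) (us u : 'cV[R]_n) Z k : R :=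
  \sum_l `|u l 0| * (EE us u k l)%:R * Yf u Z k l.

Lemma rowdec (R : realType) (n : nat) (us u : 'cV[R]_n) Z k :
  valid us u Z -> u k 0 != 0 ->
  Wt u (PP us u k) - Wt u (NN us u k) + TT us u Z k = 0.
Proof.
move=> hv hk; rewrite -(rowsum k hv) /Wt /TT -sumrB -big_split.
apply: eq_bigr => l _ /=.
have [->|hl] := eqVneq (u l 0) 0; first by rewrite normr0 !mul0r subrr addr0.
have [hY1 hY2] := Ysign hv hk hl.
rewrite /PP /NN /EE.
case: ltgtP => h.
- rewrite (hY1 h) /=; lra.
- rewrite (hY2 h) /=; lra.
- rewrite /=; lra.
Qed.

Lemma Tbound (R : realType) (n : nat) (us u : 'cV[R]_n) Z k :
  valid us u Z -> - Wt u (EE us u k) <= TT us u Z k <= Wt u (EE us u k).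
Proof.
move=> hv; rewrite /Wt /TT -sumrN; apply/andP; split; apply: ler_sum => l _;
  have := Ybound k l hv; rewrite ler_norml => /andP [h1 h2];
  have h0 : 0 <= `|u l 0| * (EE us u k l)%:R by rewrite mulr_ge0.
- by rewrite -mulrN1 ler_wpM2l.
- by rewrite -[X in _ <= X]mulr1 ler_wpM2l.
Qed.

Lemma Ttop (R : realType) (n : nat) (us u : 'cV[R]_n) Z k :
  valid us u Z -> TT us u Z k = Wt u (EE us u k) ->
  forall l, u l 0 != 0 -> cc us u k * cc us u l = 1 -> Yf u Z k l = 1.
Proof.
move=> hv hT l hl he.
have : \sum_l `|u l 0| * (EE us u k l)%:R * (1 - Yf u Z k l) = 0.
  rewrite -[RHS](subrr (Wt u (EE us u k))) -{2}hT /Wt /TT -sumrB.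
  by apply: eq_bigr => m _; rewrite mulrBr mulr1.
have hge : forall m, true -> 0 <= `|u m 0| * (EE us u k m)%:R * (1 - Yf u Z k m).
  move=> m _; rewrite mulr_ge0 // ?mulr_ge0 // subr_ge0.
  by have := Ybound k m hv; rewrite ler_norml => /andP [].
move/psumr_eq0P => /(_ hge) H.
have := H l isT; rewrite /EE he eqxx /= mulr1.
by move/eqP; rewrite mulf_eq0 normr_eq0 (negbTE hl) /= subr_eq0 => /eqP <-.
Qed.

Lemma Tbot (R : realType) (n : nat) (us u : 'cV[R]_n) Z k :
  valid us u Z -> TT us u Z k = - Wt u (EE us u k) ->
  forall l, u l 0 != 0 -> cc us u k * cc us u l = 1 -> Yf u Z k l = -1.
Proof.
move=> hv hT l hl he.
have : \sum_l `|u l 0| * (EE us u k l)%:R * (1 + Yf u Z k l) = 0.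
  transitivity (Wt u (EE us u k) + TT us u Z k); last by rewrite hT subrr.
  rewrite /Wt /TT -big_split /=.
  by apply: eq_bigr => m _; rewrite mulrDr mulr1.
have hge : forall m, true -> 0 <= `|u m 0| * (EE us u k m)%:R * (1 + Yf u Z k m).
  move=> m _; rewrite mulr_ge0 // ?mulr_ge0 //.
  have := Ybound k m hv; rewrite ler_norml => /andP [h1 _]; lra.
move/psumr_eq0P => /(_ hge) H.
have := H l isT; rewrite /EE he eqxx /= mulr1.
move/eqP; rewrite mulf_eq0 normr_eq0 (negbTE hl) /= => /eqP h; lra.
Qed.

Lemma wle (R : realType) (n : nat) (u : 'cV[R]_n) (P1 P2 Q1 Q2 : pred 'I_n) :
  (forall l, u l 0 != 0 -> (P1 l)%:R + (P2 l)%:R <= (Q1 l)%:R + (Q2 l)%:R :> R) ->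
  Wt u P1 + Wt u P2 <= Wt u Q1 + Wt u Q2.
Proof.
move=> H; rewrite /Wt -!big_split; apply: ler_sum => l _ /=.
have [->|hl] := eqVneq (u l 0) 0; first by rewrite normr0 !mul0r addr0.
by rewrite -!mulrDr ler_wpM2l // H.
Qed.

Lemma Wt_pt (R : realType) (n : nat) (u : 'cV[R]_n) (P : pred 'I_n) k :
  P k -> `|u k 0| <= Wt u P.
Proof.
move=> hk; rewrite /Wt (bigD1 k) //= hk mulr1 lerDl sumr_ge0 //.
Qed.

Lemma thrP (R : realType) (a b x : R) : 0 < a -> a * b = 1 ->
  [/\ (a * x < 1) = (x < b), (1 < a * x) = (b < x) & (a * x == 1) = (x == b)].
Proof.
move=> ha hab; split; first [apply/idP/idP => h; nra | apply/eqP/eqP => h; nra].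
Qed.

Lemma thrN (R : realType) (a b x : R) : a < 0 -> a * b = 1 ->
  [/\ (a * x < 1) = (b < x), (1 < a * x) = (x < b) & (a * x == 1) = (x == b)].
Proof.
move=> ha hab; split; first [apply/idP/idP => h; nra | apply/eqP/eqP => h; nra].
Qed.

Ltac fixone H := match type of H with
  | is_true (~~ (_ < _)) => rewrite -leNgt in H
  | is_true (~~ (_ <= _)) => rewrite -ltNge in H
  | is_true (~~ (_ == _)) => rewrite neq_lt in H; case/orP: H => H
  | is_true (_ == _) => move/eqP: H => H
  | _ => idtac
  end.

Ltac bsplit := match goal with
  |- context [nat_of_bool ?b] =>
    lazymatch b with
    | true => fail
    | false => fail
    | _ => let H := fresh "hb" in case: (boolP b) => H; fixone H
    end
  end.
Lemma nbT (R : realType) : ((nat_of_bool true)%:R : R) = 1. Proof. by []. Qed.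
Lemma nbF (R : realType) : ((nat_of_bool false)%:R : R) = 0. Proof. by []. Qed.
Ltac bcase := repeat bsplit; rewrite ?nbT ?nbF; try lra.

Lemma G1 (R : realType) (a b x : R) : b < a ->
  (a < x)%R%:R + (x == a)%R%:R <= (b < x)%R%:R + (false)%:R :> R.
Proof. move=> h; bcase. Qed.

Lemma G2 (R : realType) (a b x : R) : b < a ->
  (x < b)%R%:R + (x == b)%R%:R <= (x < a)%R%:R + (false)%:R :> R.
Proof. move=> h; bcase. Qed.

Lemma G3 (R : realType) (t x : R) : t < -1 -> -1 <= x ->
  (x < t)%R%:R + (x == t)%R%:R <= (false)%:R + (false)%:R :> R.
Proof. move=> h1 h2; bcase. Qed.
Lemma W0 (R : realType) (n : nat) (u : 'cV[R]_n) : Wt u xpred0 = 0.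
Proof. by rewrite /Wt big1 // => l _; rewrite mulr0. Qed.

Lemma rowineq (R : realType) (n : nat) (us u : 'cV[R]_n) Z k :
  valid us u Z -> u k 0 != 0 ->
  Wt u (PP us u k) <= Wt u (NN us u k) + Wt u (EE us u k) /\
  Wt u (NN us u k) <= Wt u (PP us u k) + Wt u (EE us u k).
Proof.
move=> hv hk; have r := rowdec hv hk.
have /andP[b1 b2] := Tbound k hv; split; lra.
Qed.

Lemma caseI (R : realType) (n : nat) (us u : 'cV[R]_n) Z i j :
  valid us u Z -> u i 0 != 0 -> u j 0 != 0 -> 1 < cc us u i ->
  cc us u i * cc us u j = 1 -> Yf u Z i j = 1.
Proof.
move=> hv hi hj hci he.
have hcj0 : 0 < cc us u j by nra.
have hcj1 : cc us u j < cc us u i by nra.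
have hci0 : 0 < cc us u i by lra.
have he' : cc us u j * cc us u i = 1 by rewrite mulrC.
have c1 : Wt u (NN us u j) + Wt u (EE us u j) <= Wt u (NN us u i) + Wt u xpred0.
  apply: wle => l hl; rewrite /NN /EE /=.
  have [_ -> _] := thrP (cc us u l) hci0 he.
  have [_ -> ->] := thrP (cc us u l) hcj0 he'.
  exact: G1.
have c2 : Wt u (PP us u i) + Wt u (EE us u i) <= Wt u (PP us u j) + Wt u xpred0.
  apply: wle => l hl; rewrite /PP /EE /=.
  have [-> _ ->] := thrP (cc us u l) hci0 he.
  have [-> _ _] := thrP (cc us u l) hcj0 he'.
  exact: G2.
have ri := rowdec hv hi.
have /andP[bi1 bi2] := Tbound i hv.
have [rj1 rj2] := rowineq hv hj.
rewrite W0 in c1 c2.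
have hT : TT us u Z i = Wt u (EE us u i) by lra.
exact (Ttop hv hT hj he).
Qed.

Lemma caseII (R : realType) (n : nat) (us u : 'cV[R]_n) Z i j :
  valid us u Z -> u i 0 != 0 -> u j 0 != 0 -> cc us u i < cc us u j ->
  cc us u j < 0 -> cc us u i * cc us u j = 1 -> False.
Proof.
move=> hv hi hj hij hcj he.
have hci : cc us u i < 0 by lra.
have he' : cc us u j * cc us u i = 1 by rewrite mulrC.
have c1 : Wt u (NN us u j) + Wt u (EE us u j) <= Wt u (NN us u i) + Wt u xpred0.
  apply: wle => l hl; rewrite /NN /EE /=.
  have [_ -> _] := thrN (cc us u l) hci he.
  have [_ -> ->] := thrN (cc us u l) hcj he'.
  exact: G2.
have c2 : Wt u (PP us u i) + Wt u (EE us u i) <= Wt u (PP us u j) + Wt u xpred0.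
  apply: wle => l hl; rewrite /PP /EE /=.
  have [-> _ ->] := thrN (cc us u l) hci he.
  have [-> _ _] := thrN (cc us u l) hcj he'.
  exact: G1.
have ri := rowdec hv hi; have rj := rowdec hv hj.
have /andP[bi1 bi2] := Tbound i hv.
have /andP[bj1 bj2] := Tbound j hv.
rewrite W0 in c1 c2.
have hTi : TT us u Z i = Wt u (EE us u i) by lra.
have hTj : TT us u Z j = - Wt u (EE us u j) by lra.
have y1 := Ttop hv hTi hj he.
have y2 := Tbot hv hTj hi he'.
have h := Ysym i j hv; rewrite y1 y2 in h; lra.
Qed.

Lemma c0_false (R : realType) (n : nat) (us u : 'cV[R]_n) Z k :
  valid us u Z -> u k 0 != 0 -> cc us u k = 0 -> False.
Proof.
move=> hv hk h0.
have [r1 _] := rowineq hv hk.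
have c1 : Wt u (NN us u k) + Wt u (EE us u k) <= Wt u xpred0 + Wt u xpred0.
  apply: wle => l hl; rewrite /NN /EE /= h0 mul0r; bcase.
have c2 : Wt u predT + Wt u xpred0 <= Wt u (PP us u k) + Wt u xpred0.
  apply: wle => l hl; rewrite /PP /= h0 mul0r; bcase.
have c3 := Wt_pt u (P := predT) (k := k) isT.
have : 0 < `|u k 0| by rewrite normr_gt0.
rewrite W0 in c1 c2; lra.
Qed.

Lemma Zsg (R : realType) (n : nat) (us u : 'cV[R]_n) Z i j :
  valid us u Z -> (u *m u^T - us *m us^T) i j != 0 ->
  Z i j = Num.sg ((u *m u^T - us *m us^T) i j).
Proof.
move=> hv hD; case: ltgtP hD => h // _.
- by rewrite (Zneg hv h) ltr0_sg.
- by rewrite (Zpos hv h) gtr0_sg.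
Qed.

Lemma sg_mul_self (R : realType) (x : R) : Num.sg x * x = `|x|.
Proof.
case: (ltgtP x 0) => h.
- by rewrite ltr0_sg // ltr0_norm // mulN1r.
- by rewrite gtr0_sg // gtr0_norm // mul1r.
- by rewrite h normr0 mulr0.
Qed.

Lemma rowzero (R : realType) (n : nat) (us u : 'cV[R]_n) Z m i :
  valid us u Z -> u m 0 = 0 -> us m 0 != 0 ->
  (forall k, u k 0 != 0 -> cc us u k = -1) -> u i 0 != 0 -> False.
Proof.
move=> hv hm hsm hall hi.
have hZ := hv.2.2.
have := congr1 (fun M : 'cV[R]_n => M m 0) hZ; rewrite !mxE => hrow.
have : \sum_j Z m j * u j 0 = Num.sg (us m 0) * Wt u predT.
  rewrite /Wt mulr_sumr; apply: eq_bigr => l _; rewrite /= mulr1.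
  have [->|hl] := eqVneq (u l 0) 0; first by rewrite normr0 !mulr0.
  have hD : (u *m u^T - us *m us^T) m l = us m 0 * u l 0.
    rewrite entryD hm (sc us hl) (hall l hl); ring.
  have hD0 : (u *m u^T - us *m us^T) m l != 0 by rewrite hD mulf_neq0.
  by rewrite (Zsg hv hD0) hD sgrM -mulrA sg_mul_self.
rewrite hrow => /esym /eqP; rewrite mulf_eq0 sgr_eq0 (negbTE hsm) /= => /eqP hW.
have c3 := Wt_pt u (P := predT) (k := i) isT.
have : 0 < `|u i 0| by rewrite normr_gt0.
lra.
Qed.
Lemma caseIII (R : realType) (n : nat) (us u : 'cV[R]_n) Z i j :
  valid us u Z -> u i 0 != 0 -> u j 0 != 0 -> cc us u i = -1 -> cc us u j = -1 ->
  ~ (forall k, us k 0 = - u k 0) -> Yf u Z i j = -1.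
Proof.
move=> hv hi hj hci hcj hns.
have hci0 : cc us u i < 0 by rewrite hci; lra.
have hei : cc us u i * -1 = 1 by rewrite hci; lra.
have he : cc us u i * cc us u j = 1 by rewrite hci hcj; lra.
suff key : Wt u (NN us u i) + Wt u (EE us u i) <= Wt u (PP us u i) + Wt u xpred0.
  have ri := rowdec hv hi.
  have /andP[bi1 bi2] := Tbound i hv.
  rewrite W0 in key.
  have hT : TT us u Z i = - Wt u (EE us u i) by lra.
  exact (Tbot hv hT hj he).
case: (boolP [exists k, (u k 0 != 0) && (cc us u k < -1)]).
  case/existsP => k /andP [hk hck].
  have hk0 : cc us u k < 0 by lra.
  have hek : cc us u k * (cc us u k)^-1 = 1 by rewrite mulfV // (negbT (lt_eqF hk0)).
  have ht1 : -1 < (cc us u k)^-1 by nra.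
  have [_ rk2] := rowineq hv hk.
  have c1 : Wt u (PP us u k) + Wt u (EE us u k) <= Wt u (PP us u i) + Wt u xpred0.
    apply: wle => l hl; rewrite /PP /EE /=.
    have [-> _ ->] := thrN (cc us u l) hk0 hek.
    have [-> _ _] := thrN (cc us u l) hci0 hei.
    exact: G1.
  have c2 : Wt u (NN us u i) + Wt u (EE us u i) <= Wt u (NN us u k) + Wt u xpred0.
    apply: wle => l hl; rewrite /NN /EE /=.
    have [_ -> ->] := thrN (cc us u l) hci0 hei.
    have [_ -> _] := thrN (cc us u l) hk0 hek.
    exact: G2.
  rewrite W0 in c1 c2 *; lra.
move/existsPn => hno.
have hge : forall k, u k 0 != 0 -> -1 <= cc us u k.
  move=> k hk; have := hno k; rewrite hk /= -leNgt; done.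
case: (boolP [exists k, (u k 0 != 0) && (0 < cc us u k)]).
  case/existsP => k /andP [hk hck].
  have hek : cc us u k * (cc us u k)^-1 = 1 by rewrite mulfV // (negbT (gt_eqF hck)).
  have ht1 : -1 < (cc us u k)^-1 by have := hck; rewrite -invr_gt0; lra.
  have [rk1 _] := rowineq hv hk.
  have c1 : Wt u (NN us u k) + Wt u (EE us u k) <= Wt u (PP us u i) + Wt u xpred0.
    apply: wle => l hl; rewrite /NN /PP /EE /=.
    have [_ -> ->] := thrP (cc us u l) hck hek.
    have [-> _ _] := thrN (cc us u l) hci0 hei.
    exact: G1.
  have c2 : Wt u (NN us u i) + Wt u (EE us u i) <= Wt u (PP us u k) + Wt u xpred0.
    apply: wle => l hl; rewrite /NN /PP /EE /=.
    have [_ -> ->] := thrN (cc us u l) hci0 hei.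
    have [-> _ _] := thrP (cc us u l) hck hek.
    exact: G2.
  rewrite W0 in c1 c2 *; lra.
move/existsPn => hno2.
case: (boolP [exists k, (u k 0 != 0) && (cc us u k != -1)]).
  case/existsP => k /andP [hk hck].
  have hk1 := hge k hk.
  have hk2 : cc us u k <= 0 by have := hno2 k; rewrite hk /= -leNgt.
  have [hk0|hk0] := eqVneq (cc us u k) 0; first by case: (c0_false hv hk hk0).
  have hkneg : cc us u k < 0 by rewrite lt_neqAle hk0 hk2.
  have hkgt : -1 < cc us u k by rewrite lt_neqAle eq_sym hck hk1.
  have hek : cc us u k * (cc us u k)^-1 = 1 by rewrite mulfV.
  have ht1 : (cc us u k)^-1 < -1 by nra.
  have [rk1 _] := rowineq hv hk.
  have c1 : Wt u (NN us u k) + Wt u (EE us u k) <= Wt u xpred0 + Wt u xpred0.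
    apply: wle => l hl; rewrite /NN /EE /=.
    have [_ -> ->] := thrN (cc us u l) hkneg hek.
    exact: G3 ht1 (hge l hl).
  have c3 : `|u k 0| <= Wt u (PP us u k).
    apply: Wt_pt; rewrite /PP; nra.
  have : 0 < `|u k 0| by rewrite normr_gt0.
  rewrite W0 in c1; lra.
move/existsPn => hall.
have hall' : forall k, u k 0 != 0 -> cc us u k = -1.
  by move=> k hk; have := hall k; rewrite hk /= negbK => /eqP.
exfalso; apply: hns => k.
have [hk|hk] := eqVneq (u k 0) 0.
  have [hs|hs] := eqVneq (us k 0) 0; first by rewrite hk hs oppr0.
  by case: (rowzero hv hk hs hall' hi).
by rewrite (sc us hk) (hall' k hk) mulN1r.
Qed.
Lemma sg_sq (R : realType) (x : R) : x != 0 -> Num.sg x * Num.sg x = 1.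
Proof.
move=> hx; case: (ltgtP x 0) => h.
- by rewrite ltr0_sg // mulrNN mulr1.
- by rewrite gtr0_sg // mulr1.
- by rewrite h eqxx in hx.
Qed.

Lemma keyYX (R : realType) (n : nat) (us u : 'cV[R]_n) Z i j :
  valid us u Z -> ~ (forall k, us k 0 = - u k 0) ->
  u i 0 != 0 -> u j 0 != 0 -> cc us u i * cc us u j = 1 -> cc us u i != 1 ->
  Yf u Z i j * ((cc us u i - 1) * (cc us u j - 1)) =
  - `|(cc us u i - 1) * (cc us u j - 1)|.
Proof.
move=> hv hns hi hj he hc1.
case: (ltgtP (cc us u i) 0) => hc.
- have hcj : cc us u j < 0 by nra.
  case: (ltgtP (cc us u i) (cc us u j)) => hcc.
  + by case: (caseII hv hi hj hcc hcj he).
  + by case: (caseII hv hj hi hcc hc); rewrite mulrC.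
  + have hm1 : cc us u i = -1 by nra.
    have hm2 : cc us u j = -1 by rewrite -hcc.
    rewrite (caseIII hv hi hj hm1 hm2 hns) hm1 hm2 gtr0_norm; lra.
- have hcj : 0 < cc us u j by nra.
  case: (ltgtP (cc us u i) 1) => hc1'.
  + have hcj1 : 1 < cc us u j by nra.
    have he' : cc us u j * cc us u i = 1 by rewrite mulrC.
    rewrite (Ysym i j hv) (caseI hv hj hi hcj1 he') ltr0_norm; first lra.
    nra.
  + rewrite (caseI hv hi hj hc1' he) ltr0_norm; first lra.
    nra.
  + by rewrite hc1' eqxx in hc1.
- by move: he; rewrite hc mul0r => /eqP; rewrite eq_sym oner_eq0.
Qed.

Lemma key (R : realType) (n : nat) (us u : 'cV[R]_n) Z i j :
  valid us u Z -> ~ (forall k, us k 0 = - u k 0) ->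
  (u *m u^T - us *m us^T) i j = 0 ->
  Z i j * ((us i 0 - u i 0) * (us j 0 - u j 0)) =
  - `|(us i 0 - u i 0) * (us j 0 - u j 0)|.
Proof.
move=> hv hns hD.
have [hw|hw] := eqVneq ((us i 0 - u i 0) * (us j 0 - u j 0)) 0.
  by rewrite hw mulr0 normr0 oppr0.
move: (hw); rewrite mulf_eq0 negb_or => /andP [wi wj].
have nz : forall a b, (u *m u^T - us *m us^T) a b = 0 ->
    us a 0 - u a 0 != 0 -> us b 0 - u b 0 != 0 -> u a 0 != 0.
  move=> a b hab wa wb; apply/negP => /eqP ha.
  have hsa : us a 0 != 0 by move: wa; rewrite ha subr0.
  have hsb : us b 0 = 0.
    move: hab; rewrite entryD ha mul0r sub0r => /eqP; rewrite oppr_eq0 mulf_eq0.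
    by rewrite (negbTE hsa) /= => /eqP.
  have hub : u b 0 != 0 by move: wb; rewrite hsb sub0r oppr_eq0.
  by apply: (c0_false hv hub); rewrite /cc hsb mul0r.
have hD' : (u *m u^T - us *m us^T) j i = 0.
  by move: hD; rewrite !entryD [u j 0 * _]mulrC [us j 0 * _]mulrC.
have hui := nz i j hD wi wj.
have huj := nz j i hD' wj wi.
have he : cc us u i * cc us u j = 1.
  move: hD; rewrite (Dfac us hui huj) => /eqP; rewrite !mulf_eq0 (negbTE hui) (negbTE huj) /=.
  by rewrite subr_eq0 => /eqP <-.
have hc1 : cc us u i != 1.
  by apply: contra wi => /eqP h1; rewrite (sc us hui) h1 mul1r subrr.
have hYX := keyYX hv hns hui huj he hc1.
have hZ : Z i j = Num.sg (u i 0) * Num.sg (u j 0) * Yf u Z i j.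
  rewrite /Yf.
  have -> : Num.sg (u i 0) * Num.sg (u j 0) * (Num.sg (u i 0) * Num.sg (u j 0) * Z i j)
     = (Num.sg (u i 0) * Num.sg (u i 0)) * (Num.sg (u j 0) * Num.sg (u j 0)) * Z i j by ring.
  by rewrite !sg_sq // !mul1r.
rewrite hZ (sc us hui) (sc us huj).
have -> : (cc us u i * u i 0 - u i 0) * (cc us u j * u j 0 - u j 0) =
   ((cc us u i - 1) * (cc us u j - 1)) * (u i 0 * u j 0) by ring.
have -> : Num.sg (u i 0) * Num.sg (u j 0) * Yf u Z i j *
    ((cc us u i - 1) * (cc us u j - 1) * (u i 0 * u j 0)) =
    (Yf u Z i j * ((cc us u i - 1) * (cc us u j - 1))) *
    ((Num.sg (u i 0) * u i 0) * (Num.sg (u j 0) * u j 0)) by ring.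
by rewrite hYX !sg_mul_self !normrM mulNr.
Qed.
Lemma Zu0 (R : realType) (n : nat) (us u : 'cV[R]_n) Z i :
  valid us u Z -> \sum_j Z i j * u j 0 = 0.
Proof.
move=> hv; have := congr1 (fun M : 'cV[R]_n => M i 0) hv.2.2.
by rewrite !mxE.
Qed.

Lemma ZA0 (R : realType) (n : nat) (us u : 'cV[R]_n) Z (x : 'I_n -> R) :
  valid us u Z -> \sum_i \sum_j Z i j * (u i 0 * x j + x i * u j 0) = 0.
Proof.
move=> hv.
have hsym : forall i j, Z j i = Z i j.
  by move=> i j; have := congr1 (fun M : 'M[R]_n => M i j) hv.1; rewrite mxE.
transitivity (\sum_i \sum_j (x j * (Z j i * u i 0)) + \sum_i x i * \sum_j Z i j * u j 0).
  rewrite -big_split; apply: eq_bigr => i _ /=.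
  rewrite mulr_sumr -big_split; apply: eq_bigr => j _ /=.
  rewrite hsym; ring.
rewrite exchange_big /= big1 ?add0r.
  by rewrite big1 // => i _; rewrite (Zu0 i hv) mulr0.
by move=> j _; rewrite -mulr_sumr (Zu0 j hv) mulr0.
Qed.

Lemma ZD (R : realType) (n : nat) (us u : 'cV[R]_n) Z i j :
  valid us u Z ->
  `|(u *m u^T - us *m us^T) i j| = Z i j * (u *m u^T - us *m us^T) i j.
Proof.
move=> hv; case: (ltgtP ((u *m u^T - us *m us^T) i j) 0) => h.
- by rewrite (Zneg hv h) ltr0_norm // mulN1r.
- by rewrite (Zpos hv h) gtr0_norm // mul1r.
- by rewrite h normr0 mulr0.
Qed.

Lemma Mexp (R : realType) (n : nat) (us u : 'cV[R]_n) (t : R) i j :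
  ((u + t *: (us - u)) *m (u + t *: (us - u))^T - us *m us^T) i j =
  (u *m u^T - us *m us^T) i j
  + t * (u i 0 * (us j 0 - u j 0) + (us i 0 - u i 0) * u j 0)
  + t * t * ((us i 0 - u i 0) * (us j 0 - u j 0)).
Proof. rewrite !entryD !mxE; ring. Qed.

Lemma entry_near (R : realType) (n : nat) (us u : 'cV[R]_n) Z i j :
  valid us u Z -> ~ (forall k, us k 0 = - u k 0) ->
  \forall t \near ((0:R)^'+)%classic,
  `|((u + t *: (us - u)) *m (u + t *: (us - u))^T - us *m us^T) i j| =
  Z i j * ((u + t *: (us - u)) *m (u + t *: (us - u))^T - us *m us^T) i j.
Proof.
move=> hv hns.
set a := u i 0 * (us j 0 - u j 0) + (us i 0 - u i 0) * u j 0.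
set b := (us i 0 - u i 0) * (us j 0 - u j 0).
set D := (u *m u^T - us *m us^T) i j.
have hsum : D + a + b = 0 by rewrite /D entryD /a /b; ring.
have [hD0|hD0] := eqVneq D 0.
  have hk := key hv hns hD0.
  near=> t.
  have t0 : 0 < t by near: t; exact: nbhs_right_gt.
  have t1 : t < 1 by near: t; exact: nbhs_right_lt ltr01.
  rewrite Mexp -/a -/b -/D.
  have -> : D + t * a + t * t * b = (t * t - t) * b.
    have -> : a = - D - b by lra.
    rewrite hD0; ring.
  rewrite normrM ler0_norm; last by nra.
  have -> : Z i j * ((t * t - t) * b) = (t * t - t) * (Z i j * b) by ring.
  rewrite hk; ring.
set K := `|a| + `|b| + 1.
have K0 : 0 < K by rewrite /K; have := normr_ge0 a; have := normr_ge0 b; lra.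
have De : 0 < `|D| / K by rewrite divr_gt0 // normr_gt0.
near=> t.
have t0 : 0 < t by near: t; exact: nbhs_right_gt.
have t1 : t < 1 by near: t; exact: nbhs_right_lt ltr01.
have te : t < `|D| / K by near: t; exact: nbhs_right_lt De.
rewrite Mexp -/a -/b -/D.
have h1 : `|t * a + t * t * b| <= t * `|a| + t * t * `|b|.
  rewrite (le_trans (ler_normD _ _)) // !normrM (gtr0_norm t0) //.
have h2 : t * t * `|b| <= t * `|b| by rewrite ler_wpM2r //; nra.
have h3 : t * K < `|D| by rewrite -ltr_pdivlMr.
have hr : `|t * a + t * t * b| < `|D| by rewrite /K in h3; lra.
move: hr; rewrite -addrA; set r := t * a + t * t * b => hr.
move: hr; rewrite ltr_norml => /andP [hr1 hr2].
case: (ltgtP D 0) => hD.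
- rewrite (Zneg hv hD) ltr0_norm; first by rewrite mulN1r.
  by rewrite ltr0_norm // in hr1 hr2; lra.
- rewrite (Zpos hv hD) gtr0_norm; first by rewrite mul1r.
  by rewrite gtr0_norm // in hr1 hr2; lra.
- by rewrite hD eqxx in hD0.
Unshelve. all: by end_near.
Qed.
Lemma fobj_diff (R : realType) (n : nat) (us u : 'cV[R]_n) Z (t : R) :
  valid us u Z ->
  (forall i j,
    `|((u + t *: (us - u)) *m (u + t *: (us - u))^T - us *m us^T) i j| =
    Z i j * ((u + t *: (us - u)) *m (u + t *: (us - u))^T - us *m us^T) i j) ->
  fobj us (u + t *: (us - u)) - fobj us u =
  t * (t * (2^-1 * \sum_i \sum_j Z i j * ((us i 0 - u i 0) * (us j 0 - u j 0)))).
Proof.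
move=> hv H; rewrite /fobj /l1norm.
have E1 : \sum_i \sum_j
    `|((u + t *: (us - u)) *m (u + t *: (us - u))^T - us *m us^T) i j| =
  \sum_i \sum_j Z i j * (u *m u^T - us *m us^T) i j
  + t * (\sum_i \sum_j Z i j * (u i 0 * (us j 0 - u j 0) + (us i 0 - u i 0) * u j 0))
  + t * t * (\sum_i \sum_j Z i j * ((us i 0 - u i 0) * (us j 0 - u j 0))).
  rewrite !mulr_sumr -!big_split; apply: eq_bigr => i _ /=.
  rewrite !mulr_sumr -!big_split; apply: eq_bigr => j _ /=.
  rewrite H Mexp; ring.
have E2 : \sum_i \sum_j `|(u *m u^T - us *m us^T) i j| =
  \sum_i \sum_j Z i j * (u *m u^T - us *m us^T) i j.
  by apply: eq_bigr => i _; apply: eq_bigr => j _; rewrite (ZD _ _ hv).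
rewrite E1 E2 (ZA0 (fun j => us j 0 - u j 0) hv); ring.
Qed.

Local Open Scope classical_set_scope.
Lemma dir_main (R : realType) (n : nat) (us u : 'cV[R]_n) Z :
  valid us u Z -> ~ (forall k, us k 0 = - u k 0) ->
  dirderiv_is (fobj us) u (us - u) 0.
Proof.
move=> hv hns; rewrite /dirderiv_is.
set C := 2^-1 * \sum_i \sum_j Z i j * ((us i 0 - u i 0) * (us j 0 - u j 0)).
have H : \forall t \near ((0:R)^'+)%classic, forall i j,
    `|((u + t *: (us - u)) *m (u + t *: (us - u))^T - us *m us^T) i j| =
    Z i j * ((u + t *: (us - u)) *m (u + t *: (us - u))^T - us *m us^T) i j.
  apply: filter_forall => i; apply: filter_forall => j; exact: entry_near.
have hnear : \forall t \near ((0:R)^'+)%classic,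
    t * C = (fobj us (u + t *: (us - u)) - fobj us u) / t.
  apply: filterS2 H (nbhs_right_gt (0:R)) => t Ht t0.
  rewrite (fobj_diff hv Ht) -/C [t * (t * C)]mulrC mulfK //.
  by rewrite gt_eqF.
apply: cvg_trans (near_eq_cvg hnear) _.
have h0 : (fun t : R => t) @ (0:R)^'+ --> (0:R).
  by apply: cvg_at_right_filter; exact: cvg_id.
have := @cvgMr_tmp R R _ _ (fun t : R => t) 0 C h0; rewrite mul0r; exact.
Qed.

Local Close Scope classical_set_scope.
Unset Implicit Arguments.

Theorem lemma2 (R : realType) (n : nat) (us u : 'cV[R]_n) :
  spurious us u ->
  dirderiv_is (fobj us) u (us - u) 0 /\ dirderiv_is (fobj us) u (- us - u) 0.
Proof.
move=> [[Z [hs [hsg hZu]]] [hne1 hne2]].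
have hv : valid us u Z by [].
split.
  apply: (dir_main hv) => hall; apply: hne2; apply/matrixP => i j.
  by rewrite (ord1 j) !mxE hall opprK.
have E : (- us) *m (- us)^T = us *m us^T by rewrite linearN mulNmx mulmxN opprK.
have hv' : valid (- us) u Z by rewrite /valid E.
have hf : fobj (- us) = fobj us.
  by apply: funext => v; rewrite /fobj linearN mulNmx mulmxN opprK.
rewrite -hf; apply: (dir_main hv') => hall; apply: hne1; apply/matrixP => i j.
by rewrite (ord1 j); have := hall i; rewrite !mxE => h; lra.
Qed.
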